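(* Let $L_x=L_y=:L>0$, $L_{xy}\geq 0$, $0<\mu_x\leq L$, $0<\mu_y\leq L$, set $\mu=\min\{\mu_x,\mu_y\}$, and let $t\in\left(0, \tfrac{2\mu}{\mu L+L_{xy}^2}\right)$. Let $$ \alpha=1+\tfrac{1}{2}\left(L^2+\mu^2+2L_{xy}^2\right)t^2-(L+\mu)t +\tfrac{1}{2}(L-\mu)t\sqrt{(Lt + \mu t - 2)^2 + 4L_{xy}^2t^2}. $$ Then the bound $\|x^2-x^\star\|^2+\|y^2-y^\star\|^2\leq\alpha(\|x^1-x^\star\|^2+\|y^1-y^\star\|^2)$ for one step of the gradient descent-ascent method is exact: there exist $n,m$, a function $F\in\mathcal{F}(L_x, L_y, L_{xy}, \mu_x, \mu_y)$ on $\mathbb{R}^n\times\mathbb{R}^m$ with unique saddle point $(x^\star,y^\star)$, and an initial point $(x^1,y^1)\neq(x^\star,y^\star)$ such that $x^{2}=x^1-t\nabla_x F(x^1, y^1)$, $y^{2}=y^1+t\nabla_y F(x^1, y^1)$ satisfy $$ \|x^2-x^\star\|^2+\|y^2-y^\star\|^2= \alpha\left(\|x^1-x^\star\|^2+\|y^1-y^\star\|^2\right). $$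
   Context: $\mathcal{F}(L_x, L_y, L_{xy}, \mu_x, \mu_y)$ denotes the set of differentiable $F:\mathbb{R}^n\times\mathbb{R}^m\to\mathbb{R}$ such that for all $x,x_1,x_2,y,y_1,y_2$: $\|\nabla_x F(x_2, y)-\nabla_x F(x_1, y)\|\leq L_x\|x_2-x_1\|$; $\|\nabla_y F(x, y_2)-\nabla_y F(x, y_1)\|\leq L_y\|y_2-y_1\|$; $\|\nabla_x F(x, y_2)-\nabla_x F(x, y_1)\|\leq L_{xy}\|y_2-y_1\|$; $\|\nabla_y F(x_2, y)-\nabla_y F(x_1, y)\|\leq L_{xy}\|x_2-x_1\|$; $F(\cdot, y)-\tfrac{\mu_x}{2}\|\cdot\|^2$ convex for every $y$ and $F(x,\cdot)+\tfrac{\mu_y}{2}\|\cdot\|^2$ concave for every $x$. A saddle point is $(x^\star,y^\star)$ with $F(x^\star, y)\leq F(x^\star, y^\star)\leq F(x, y^\star)$ for all $x,y$. *)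

(* Defs.v *)
From HB Require Import structures.
From mathcomp Require Import all_boot all_order all_algebra.
From mathcomp Require Import all_classical all_reals all_analysis.
Set Implicit Arguments. Unset Strict Implicit. Unset Printing Implicit Defensive.
Import Order.TTheory GRing.Theory Num.Theory.
Import numFieldNormedType.Exports.
Local Open Scope ring_scope.

Section Defs.
Variable R : realType.

(* Euclidean norm on R^n (rows); the library's matrix norm is the sup norm. *)
Definition enorm (n : nat) (v : 'rV[R]_n) : R := Num.sqrt (\sum_(i < n) v 0 i ^+ 2).

Definition edot (n : nat) (u v : 'rV[R]_n) : R := \sum_(i < n) u 0 i * v 0 i.

Definition gradx (n m : nat) (F : 'rV[R]_n * 'rV[R]_m -> R) (p : 'rV[R]_n * 'rV[R]_m)
  : 'rV[R]_n := \row_(i < n) ('d F p (delta_mx 0 i, 0)).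
Definition grady (n m : nat) (F : 'rV[R]_n * 'rV[R]_m -> R) (p : 'rV[R]_n * 'rV[R]_m)
  : 'rV[R]_m := \row_(j < m) ('d F p (0, delta_mx 0 j)).

Definition convex_on_Rn (n : nat) (f : 'rV[R]_n -> R) : Prop :=
  forall (a b : 'rV[R]_n) (s : R), 0 <= s -> s <= 1 ->
    f (s *: a + (1 - s) *: b) <= s * f a + (1 - s) * f b.

Definition in_class (n m : nat) (Lx Ly Lxy mux muy : R)
  (F : 'rV[R]_n * 'rV[R]_m -> R) : Prop :=
  (forall p, differentiable F p) /\
  (forall x1 x2 y, enorm (gradx F (x2, y) - gradx F (x1, y)) <= Lx * enorm (x2 - x1)) /\
  (forall x y1 y2, enorm (grady F (x, y2) - grady F (x, y1)) <= Ly * enorm (y2 - y1)) /\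
  (forall x y1 y2, enorm (gradx F (x, y2) - gradx F (x, y1)) <= Lxy * enorm (y2 - y1)) /\
  (forall x1 x2 y, enorm (grady F (x2, y) - grady F (x1, y)) <= Lxy * enorm (x2 - x1)) /\
  (forall y, convex_on_Rn (fun x => F (x, y) - mux / 2 * enorm x ^+ 2)) /\
  (forall x, convex_on_Rn (fun y => - (F (x, y) + muy / 2 * enorm y ^+ 2))).

Definition saddle_point (n m : nat) (F : 'rV[R]_n * 'rV[R]_m -> R)
  (xs : 'rV[R]_n) (ys : 'rV[R]_m) : Prop :=
  forall x y, F (xs, y) <= F (xs, ys) /\ F (xs, ys) <= F (x, ys).

Definition gda_alpha (L Lxy mu t : R) : R :=
  1 + 2^-1 * (L ^+ 2 + mu ^+ 2 + 2 * Lxy ^+ 2) * t ^+ 2 - (L + mu) * t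
    + 2^-1 * (L - mu) * t * Num.sqrt ((L * t + mu * t - 2) ^+ 2 + 4 * Lxy ^+ 2 * t ^+ 2).

End Defs.

(* Main.v *)
Require Import Defs.
From HB Require Import structures.
From mathcomp Require Import all_boot all_order all_algebra.
From mathcomp Require Import all_classical all_reals all_analysis.
From mathcomp Require Import ring lra.
Import Order.TTheory GRing.Theory Num.Theory.
Import numFieldNormedType.Exports.
Local Open Scope ring_scope.
Local Open Scope ring_scope.

Lemma eig (R : rcfType) (p q r : R) : exists v1 v2 : R, 0 < v1 ^+ 2 + v2 ^+ 2 /\
  p * v1 ^+ 2 + 2 * q * v1 * v2 + r * v2 ^+ 2 =
  ((p + r) / 2 + Num.sqrt (((p - r) / 2) ^+ 2 + q ^+ 2)) * (v1 ^+ 2 + v2 ^+ 2).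
Proof.
have [->|q0] := eqVneq q 0.
  have -> : (0:R) ^+ 2 = 0 by rewrite expr2 mulr0.
  rewrite addr0 sqrtr_sqr.
  have [pr|pr] := lerP r p.
    exists 1, 0; split; first lra.
    rewrite ger0_norm; last lra.
    by field.
  exists 0, 1; split; first lra.
  rewrite ltr0_norm; last lra.
  by field.
set D := Num.sqrt _.
have hD : D ^+ 2 = ((p - r) / 2) ^+ 2 + q ^+ 2.
  by rewrite sqr_sqrtr // addr_ge0 // sqr_ge0.
exists q, ((p + r) / 2 + D - p); split.
  apply: (@lt_le_trans _ _ (q ^+ 2)).
    by rewrite exprn_even_gt0 //= q0 orbT.
  by rewrite lerDl sqr_ge0.
apply/eqP; rewrite -subr_eq0; apply/eqP.
transitivity (((p + r) / 2 + D - p) * (((p - r) / 2) ^+ 2 + q ^+ 2 - D ^+ 2)).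
  by field.
by rewrite hD subrr mulr0.
Qed.

Definition uu {R : realType} (q : 'rV[R]_1 * 'rV[R]_1) : R := q.1 0 0.
Definition ww {R : realType} (q : 'rV[R]_1 * 'rV[R]_1) : R := q.2 0 0.

Global Instance is_diff_u (R : realType) (p : 'rV[R]_1 * 'rV[R]_1) :
  is_diff p (@uu R) (@uu R).
Proof.
have lin : linear (@uu R).
  by move=> k x y; rewrite /uu /= !mxE.
pose fM := GRing.isLinear.Build _ _ _ _ _ lin.
pose f : {linear ('rV[R]_1 * 'rV[R]_1)%type -> R} := HB.pack (@uu R) fM.
have cf : continuous f.
  move=> q; apply: (@continuous_comp _ _ _ fst (fun M : 'rV[R]_1 => M 0 0)).
    exact: cvg_fst.
  exact: coord_continuous.
change (is_diff p (f : _ -> R) (f : _ -> R)).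
apply: DiffDef; first exact: linear_differentiable.
exact: diff_lin.
Qed.

Global Instance is_diff_w (R : realType) (p : 'rV[R]_1 * 'rV[R]_1) :
  is_diff p (@ww R) (@ww R).
Proof.
have lin : linear (@ww R).
  by move=> k x y; rewrite /ww /= !mxE.
pose fM := GRing.isLinear.Build _ _ _ _ _ lin.
pose f : {linear ('rV[R]_1 * 'rV[R]_1)%type -> R} := HB.pack (@ww R) fM.
have cf : continuous f.
  move=> q; apply: (@continuous_comp _ _ _ snd (fun M : 'rV[R]_1 => M 0 0)).
    exact: cvg_snd.
  exact: coord_continuous.
change (is_diff p (f : _ -> R) (f : _ -> R)).
apply: DiffDef; first exact: linear_differentiable.
exact: diff_lin.
Qed.

Definition Fq {R : realType} (a b c : R) : 'rV[R]_1 * 'rV[R]_1 -> R :=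
  (a / 2) *: (@uu R * @uu R) + b *: (@uu R * @ww R) - (c / 2) *: (@ww R * @ww R).

Lemma Fq_diff {R : realType} (a b c : R) p : differentiable (Fq a b c) p.
Proof. rewrite /Fq. exact: ex_diff. Qed.

Lemma Fq_d {R : realType} (a b c : R) p h : 'd (Fq a b c) p h =
  a * uu p * uu h + b * (uu p * ww h + ww p * uu h) - c * ww p * ww h.
Proof. rewrite /Fq diff_val /= !fctE /= -![_ *: _]/(_ * _). by field. Qed.

Lemma Fq_val {R : realType} (a b c : R) (x y : 'rV[R]_1) :
  Fq a b c (x, y) = a / 2 * x 0 0 ^+ 2 + b * x 0 0 * y 0 0 - c / 2 * y 0 0 ^+ 2.
Proof. rewrite /Fq !fctE /uu /ww /= -![_ *: _]/(_ * _). by field. Qed.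

Lemma gx {R : realType} (a b c : R) (x y : 'rV[R]_1) :
  gradx (Fq a b c) (x, y) = \row_(j < 1) (a * x 0 0 + b * y 0 0).
Proof.
apply/matrixP => i j; rewrite !ord1 /gradx !mxE Fq_d /uu /ww /= !mxE /=.
by field.
Qed.

Lemma gy {R : realType} (a b c : R) (x y : 'rV[R]_1) :
  grady (Fq a b c) (x, y) = \row_(j < 1) (b * x 0 0 - c * y 0 0).
Proof.
apply/matrixP => i j; rewrite !ord1 /grady !mxE Fq_d /uu /ww /= !mxE /=.
by field.
Qed.

Lemma enorm1 {R : realType} (v : 'rV[R]_1) : enorm v = `|v 0 0|.
Proof. by rewrite /enorm big_ord1 sqrtr_sqr. Qed.

Lemma enorm1_sqr {R : realType} (v : 'rV[R]_1) : enorm v ^+ 2 = v 0 0 ^+ 2.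
Proof. by rewrite /enorm big_ord1 sqr_sqrtr // sqr_ge0. Qed.

Lemma quad_nonneg {R : realType} (k s d : R) :
  0 <= k -> 0 <= s -> s <= 1 -> 0 <= k * s * (1 - s) * d ^+ 2.
Proof.
move=> *; apply: mulr_ge0; last exact: sqr_ge0.
apply: mulr_ge0; [apply: mulr_ge0|]; lra.
Qed.

Lemma core {R : realType} (L Lxy mux muy mu t a c : R) :
  0 < a -> 0 < c -> mux <= a -> a <= L -> muy <= c -> c <= L -> 0 <= Lxy ->
  0 <= t -> mu <= L -> a + c = L + mu -> (a - c) ^+ 2 = (L - mu) ^+ 2 ->
  exists (n m : nat) (F : 'rV[R]_n * 'rV[R]_m -> R)
         (xs : 'rV[R]_n) (ys : 'rV[R]_m) (x1 : 'rV[R]_n) (y1 : 'rV[R]_m),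
    in_class L L Lxy mux muy F /\
    saddle_point F xs ys /\
    (forall xs' ys', saddle_point F xs' ys' -> xs' = xs /\ ys' = ys) /\
    (x1, y1) <> (xs, ys) /\
    let x2 := x1 - t *: gradx F (x1, y1) in
    let y2 := y1 + t *: grady F (x1, y1) in
    enorm (x2 - xs) ^+ 2 + enorm (y2 - ys) ^+ 2 =
      gda_alpha L Lxy mu t * (enorm (x1 - xs) ^+ 2 + enorm (y1 - ys) ^+ 2).
Proof.
move=> a0 c0 mxa aL myc cL b0 t0 muL hac hdiff.
set b := Lxy.
pose p := (1 - t * a) ^+ 2 + (t * b) ^+ 2.
pose r := (t * b) ^+ 2 + (1 - t * c) ^+ 2.
pose q := t ^+ 2 * b * (a - c).
have [v1 [v2 [vpos heig]]] := @eig _ p q r.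
exists 1%N, 1%N, (Fq a b c), 0, 0, (\row_(j < 1) v1), (\row_(j < 1) v2).
split.
  split; first exact: Fq_diff.
  split.
    move=> x1 x2 y; rewrite !gx !enorm1 !mxE.
    have -> : a * x2 0 0 + b * y 0 0 - (a * x1 0 0 + b * y 0 0) =
      a * (x2 0 0 - x1 0 0) by ring.
    by rewrite normrM (ger0_norm (ltW a0)) ler_wpM2r.
  split.
    move=> x y1 y2; rewrite !gy !enorm1 !mxE.
    have -> : b * x 0 0 - c * y2 0 0 - (b * x 0 0 - c * y1 0 0) =
      - c * (y2 0 0 - y1 0 0) by ring.
    by rewrite normrM normrN (ger0_norm (ltW c0)) ler_wpM2r.
  split.
    move=> x y1 y2; rewrite !gx !enorm1 !mxE.
    have -> : a * x 0 0 + b * y2 0 0 - (a * x 0 0 + b * y1 0 0) =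
      b * (y2 0 0 - y1 0 0) by ring.
    by rewrite normrM (ger0_norm b0).
  split.
    move=> x1 x2 y; rewrite !gy !enorm1 !mxE.
    have -> : b * x2 0 0 - c * y 0 0 - (b * x1 0 0 - c * y 0 0) =
      b * (x2 0 0 - x1 0 0) by ring.
    by rewrite normrM (ger0_norm b0).
  split.
    move=> y A B s s0 s1; rewrite /= !Fq_val !enorm1_sqr !mxE.
    rewrite -subr_ge0.
    set A0 := A 0 0; set B0 := B 0 0; set Y := y 0 0.
    have -> : s * (a / 2 * A0 ^+ 2 + b * A0 * Y - c / 2 * Y ^+ 2 - mux / 2 * A0 ^+ 2) +
      (1 - s) * (a / 2 * B0 ^+ 2 + b * B0 * Y - c / 2 * Y ^+ 2 - mux / 2 * B0 ^+ 2) -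
      (a / 2 * (s * A0 + (1 - s) * B0) ^+ 2 + b * (s * A0 + (1 - s) * B0) * Y -
       c / 2 * Y ^+ 2 - mux / 2 * (s * A0 + (1 - s) * B0) ^+ 2) =
      ((a - mux) / 2) * s * (1 - s) * (A0 - B0) ^+ 2 by field.
    apply: quad_nonneg => //; lra.
  move=> x A B s s0 s1; rewrite /= !Fq_val !enorm1_sqr !mxE.
  rewrite -subr_ge0.
  set A0 := A 0 0; set B0 := B 0 0; set X := x 0 0.
  have -> : s * - (a / 2 * X ^+ 2 + b * X * A0 - c / 2 * A0 ^+ 2 + muy / 2 * A0 ^+ 2) +
    (1 - s) * - (a / 2 * X ^+ 2 + b * X * B0 - c / 2 * B0 ^+ 2 + muy / 2 * B0 ^+ 2) -
    - (a / 2 * X ^+ 2 + b * X * (s * A0 + (1 - s) * B0) -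
       c / 2 * (s * A0 + (1 - s) * B0) ^+ 2 + muy / 2 * (s * A0 + (1 - s) * B0) ^+ 2) =
    ((c - muy) / 2) * s * (1 - s) * (A0 - B0) ^+ 2 by field.
  apply: quad_nonneg => //; lra.
split.
  move=> x y; rewrite !Fq_val !mxE; split.
    have : 0 <= c / 2 * y 0 0 ^+ 2 by apply: mulr_ge0; [lra| exact: sqr_ge0].
    lra.
  have : 0 <= a / 2 * x 0 0 ^+ 2 by apply: mulr_ge0; [lra| exact: sqr_ge0].
  lra.
split.
  move=> X Y sp.
  have [h1 _] := sp X (\row_(j < 1) (b * X 0 0 / c)).
  have [_ h2] := sp (\row_(j < 1) (- (b * Y 0 0) / a)) Y.
  rewrite !Fq_val !mxE in h1 h2.
  set X0 := X 0 0 in h1 h2; set Y0 := Y 0 0 in h1 h2.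
  rewrite -subr_ge0 in h1; rewrite -subr_ge0 in h2.
  have e1 : a / 2 * X0 ^+ 2 + b * X0 * Y0 - c / 2 * Y0 ^+ 2 -
    (a / 2 * X0 ^+ 2 + b * X0 * (b * X0 / c) - c / 2 * (b * X0 / c) ^+ 2) =
    - (c / 2) * (Y0 - b * X0 / c) ^+ 2.
    by field; rewrite gt_eqF.
  have e2 : a / 2 * (- (b * Y0) / a) ^+ 2 + b * (- (b * Y0) / a) * Y0 - c / 2 * Y0 ^+ 2 -
    (a / 2 * X0 ^+ 2 + b * X0 * Y0 - c / 2 * Y0 ^+ 2) =
    - (a / 2) * (X0 + b * Y0 / a) ^+ 2.
    by field; rewrite gt_eqF.
  rewrite e1 in h1; rewrite e2 in h2.
  have s1 : (Y0 - b * X0 / c) ^+ 2 <= 0 by nra.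
  have s2 : (X0 + b * Y0 / a) ^+ 2 <= 0 by nra.
  have z1 : Y0 - b * X0 / c = 0.
    by apply/eqP; rewrite -sqrf_eq0 eq_le s1 sqr_ge0.
  have z2 : X0 + b * Y0 / a = 0.
    by apply/eqP; rewrite -sqrf_eq0 eq_le s2 sqr_ge0.
  have f1 : c * Y0 = b * X0.
    have -> : Y0 = b * X0 / c by apply/eqP; rewrite -subr_eq0 z1.
    by field; rewrite gt_eqF.
  have f2 : a * X0 = - (b * Y0).
    have -> : X0 = - (b * Y0 / a) by apply/eqP; rewrite -subr_eq0 opprK z2.
    by field; rewrite gt_eqF.
  have pos : 0 < a * c + b ^+ 2.
    by apply: ltr_wpDr; [exact: sqr_ge0 | exact: mulr_gt0].
  have : X0 * (a * c + b ^+ 2) = 0.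
    by transitivity (c * (a * X0) + b * (b * X0)); [ring | rewrite f2 -f1; ring].
  move/eqP; rewrite mulf_eq0 (gt_eqF pos) orbF => /eqP hx.
  move: f1; rewrite hx mulr0 => /eqP; rewrite mulf_eq0 (gt_eqF c0) /= => /eqP hy.
  by split; apply/matrixP => i j; rewrite !ord1 mxE.
split.
  case=> h1 h2.
  have e1 : v1 = 0 by have := congr1 (fun M : 'rV[R]_1 => M 0 0) h1; rewrite /= !mxE.
  have e2 : v2 = 0 by have := congr1 (fun M : 'rV[R]_1 => M 0 0) h2; rewrite /= !mxE.
  by move: vpos; rewrite e1 e2 expr2 mulr0 addr0 ltxx.
have hsq : a ^+ 2 + c ^+ 2 = L ^+ 2 + mu ^+ 2.
  transitivity (((a + c) ^+ 2 + (a - c) ^+ 2) / 2); first by field.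
  by rewrite hac hdiff; field.
have hs : ((p - r) / 2) ^+ 2 + q ^+ 2 =
  ((L - mu) * t / 2) ^+ 2 * ((L * t + mu * t - 2) ^+ 2 + 4 * b ^+ 2 * t ^+ 2).
  transitivity ((a - c) ^+ 2 * (t ^+ 2 * (2 - (a + c) * t) ^+ 2 / 4 + t ^+ 4 * b ^+ 2)).
    by rewrite /p /r /q; field.
  by rewrite hac hdiff; field.
have hpr : (p + r) / 2 = 1 + 2^-1 * (a ^+ 2 + c ^+ 2 + 2 * b ^+ 2) * t ^+ 2 - (a + c) * t.
  by rewrite /p /r; field.
have halpha : gda_alpha L b mu t = (p + r) / 2 + Num.sqrt (((p - r) / 2) ^+ 2 + q ^+ 2).
  rewrite hs sqrtrM ?sqr_ge0 // sqrtr_sqr ger0_norm; last first.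
    by apply: divr_ge0 => //; apply: mulr_ge0 => //; rewrite subr_ge0.
  rewrite hpr hsq hac /gda_alpha.
  by field.
cbv zeta.
rewrite !enorm1_sqr gx gy !mxE !subr0 halpha -heig /p /r /q.
by ring.
Qed.

Theorem proposition2p4 (R : realType) (L Lxy mux muy t : R) :
  0 < L -> 0 <= Lxy -> 0 < mux -> mux <= L -> 0 < muy -> muy <= L ->
  0 < t -> t < 2 * Num.min mux muy / (Num.min mux muy * L + Lxy ^+ 2) ->
  exists (n m : nat) (F : 'rV[R]_n * 'rV[R]_m -> R)
         (xs : 'rV[R]_n) (ys : 'rV[R]_m) (x1 : 'rV[R]_n) (y1 : 'rV[R]_m),
    in_class L L Lxy mux muy F /\
    saddle_point F xs ys /\
    (forall xs' ys', saddle_point F xs' ys' -> xs' = xs /\ ys' = ys) /\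
    (x1, y1) <> (xs, ys) /\
    let x2 := x1 - t *: gradx F (x1, y1) in
    let y2 := y1 + t *: grady F (x1, y1) in
    enorm (x2 - xs) ^+ 2 + enorm (y2 - ys) ^+ 2 =
      gda_alpha L Lxy (Num.min mux muy) t * (enorm (x1 - xs) ^+ 2 + enorm (y1 - ys) ^+ 2).
Proof.
move=> L0 b0 mx0 mxL my0 myL t0 _.
have [h|h] := lerP mux muy.
  have hm : Num.min mux muy = mux by rewrite min_l.
  apply: (@core R L Lxy mux muy _ t mux L) => //; rewrite ?hm //; try lra.
have hm : Num.min mux muy = muy by rewrite min_r // ltW.
apply: (@core R L Lxy mux muy _ t L muy) => //; rewrite ?hm //; try lra.
Qed.
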